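(* Let $A$ be an abelian topological group such that $\alpha_A$ is continuous. Then $\hat A$ has the quasi-convex compactness property.
   Context: $\mathbb{T}=\mathbb{R}/\mathbb{Z}$, $\Lambda_1$ is the image of $[-\tfrac14,\tfrac14]$ in $\mathbb{T}$. For an abelian topological group $B$, $\hat B$ is the group of continuous homomorphisms $B\to\mathbb{T}$ with the compact-open topology and $\alpha_B\colon B\to\hat{\hat B}$, $\alpha_B(b)(\chi)=\chi(b)$. For $S\subseteq B$, $S^\vartriangleright=\{\chi\in\hat B\mid\chi(S)\subseteq\Lambda_1\}$; for $\Phi\subseteq\hat B$, $\Phi^\vartriangleleft=\{b\in B\mid\chi(b)\in\Lambda_1\ \forall\chi\in\Phi\}$. $B$ has the quasi-convex compactness property (QCP) if for every compact $K\subseteq B$ the set $K^{\vartriangleright\vartriangleleft}$ (polars taken with respect to the pair $B,\hat B$) is compact. For $B=\hat A$, the polars are taken with respect to the pair $\hat A,\hat{\hat A}$. *)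

(* Defs.v *)
From HB Require Import structures.
From mathcomp Require Import all_boot all_order all_algebra.
From mathcomp Require Import generic_quotient.
From mathcomp Require Import all_classical all_reals all_analysis.
Set Implicit Arguments. Unset Strict Implicit. Unset Printing Implicit Defensive.
Import Order.TTheory GRing.Theory Num.Theory.
Import numFieldNormedType.Exports.
Local Open Scope classical_set_scope.
Local Open Scope ring_scope.
Local Open Scope quotient_scope.

Section Torus.
Variable R : realType.

Definition modZ : rel R := fun x y => (x - y) \is a Num.int.

Lemma modZ_refl : reflexive modZ.
Proof. by move=> x; rewrite /modZ subrr rpred0. Qed.
Lemma modZ_sym : symmetric modZ.
Proof. by move=> x y; rewrite /modZ -opprB rpredN. Qed.
Lemma modZ_trans : transitive modZ.
Proof.
move=> y x z hxy hyz; rewrite /modZ -(subrKA y) addrC.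
by rewrite rpredD.
Qed.

Definition modZ_equiv : equiv_rel R := EquivRel modZ modZ_refl modZ_sym modZ_trans.

Definition torus : Type := quotient_topology {eq_quot modZ_equiv}.
End Torus.

HB.instance Definition _ (R : realType) := Choice.on (torus R).
HB.instance Definition _ (R : realType) := Quotient.on (torus R).
HB.instance Definition _ (R : realType) :=
  Topological.copy (torus R) (quotient_topology {eq_quot modZ_equiv R}).

Section TorusZmod.
Variable R : realType.
Local Notation T := (torus R).
Local Notation pi := (\pi_T : R -> T).

Lemma torus_eqP (x y : R) : pi x = pi y <-> modZ x y.
Proof.
change (\pi_{eq_quot modZ_equiv R} x = \pi_{eq_quot modZ_equiv R} y <->
  modZ_equiv R x y).
by split => [/eqmodP|/eqmodP].
Qed.

Lemma torus_reprK (x : R) : modZ (repr (pi x)) x.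
Proof. by apply/torus_eqP; rewrite reprK. Qed.

Definition torus_zero : T := pi 0.
Definition torus_opp (x : T) : T := pi (- repr x).
Definition torus_add (x y : T) : T := pi (repr x + repr y).

Lemma torus_addE (x y : R) : torus_add (pi x) (pi y) = pi (x + y).
Proof.
apply/torus_eqP; rewrite /modZ opprD addrACA.
by apply: rpredD; apply: torus_reprK.
Qed.

Lemma torus_oppE (x : R) : torus_opp (pi x) = pi (- x).
Proof.
apply/torus_eqP; rewrite /modZ opprK addrC -opprB rpredN.
exact: torus_reprK.
Qed.

Lemma torus_piP (x : T) : exists x' : R, x = pi x'.
Proof. by exists (repr x); rewrite reprK. Qed.

Lemma torus_addA : associative torus_add.
Proof.
move=> x y z; have [x' ->] := torus_piP x; have [y' ->] := torus_piP y.
have [z' ->] := torus_piP z.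
by rewrite !torus_addE addrA.
Qed.
Lemma torus_addC : commutative torus_add.
Proof.
move=> x y; have [x' ->] := torus_piP x; have [y' ->] := torus_piP y.
by rewrite !torus_addE addrC.
Qed.
Lemma torus_add0 : left_id torus_zero torus_add.
Proof.
by move=> x; have [x' ->] := torus_piP x; rewrite /torus_zero torus_addE add0r.
Qed.
Lemma torus_addN : left_inverse torus_zero torus_opp torus_add.
Proof.
by move=> x; have [x' ->] := torus_piP x; rewrite torus_oppE torus_addE addNr.
Qed.

HB.instance Definition _ := GRing.isZmodule.Build T
  torus_addA torus_addC torus_add0 torus_addN.
End TorusZmod.

Unset Implicit Arguments.

Definition Lambda1 (R : realType) : set (torus R) :=
  [set \pi_(torus R) x | x in [set x : R | - 4^-1 <= x <= 4^-1]].

(** Polars with respect to a pairing  ev : X -> Y -> T ;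
    Y0 is the ambient dual (the set of characters) *)
Definition rpolar (R : realType) (X Y : Type) (ev : X -> Y -> torus R)
  (Y0 : set Y) (S : set X) : set Y :=
  [set y | Y0 y /\ forall x, S x -> Lambda1 R (ev x y)].

Definition lpolar (R : realType) (X Y : Type) (ev : X -> Y -> torus R)
  (Phi : set Y) : set X :=
  [set x | forall y, Phi y -> Lambda1 R (ev x y)].

Definition characters (R : realType) (A : topologicalZmodType) :
    set {compact-open, A -> torus R} :=
  [set f | continuous (f : A -> torus R) /\ {morph f : x y / x + y}].

(** The dual group \hat A, with the compact-open topology (subspace topology
    inherited from {compact-open, A -> T}). *)
Definition dual (R : realType) (A : topologicalZmodType) : topologicalType :=
  set_type (characters R A).

Definition dual_val (R : realType) (A : topologicalZmodType) (chi : dual R A) :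
  A -> torus R := set_val chi.

(** Characters of \hat A: continuous homomorphisms \hat A -> T.  The group law
    of \hat A is pointwise addition of characters. *)
Definition bicharacters (R : realType) (A : topologicalZmodType) :
    set (dual R A -> torus R) :=
  [set phi | continuous phi /\
     forall chi psi zeta : dual R A,
       (forall a, dual_val R A zeta a = dual_val R A chi a + dual_val R A psi a) ->
       phi zeta = phi chi + phi psi].

Definition bidual_ev (R : realType) (A : topologicalZmodType)
  (chi : dual R A) (phi : dual R A -> torus R) : torus R := phi chi.

Definition dual_QCP (R : realType) (A : topologicalZmodType) : Prop :=
  forall K : set (dual R A), compact K ->
    compact (lpolar R _ _ (bidual_ev R A)
               (rpolar R _ _ (bidual_ev R A) (bicharacters R A) K)).

Definition alpha (R : realType) (A : topologicalZmodType) (a : A) :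
  {compact-open, dual R A -> torus R} := fun chi => dual_val R A chi a.

(* Main.v *)
Require Import Defs.
From HB Require Import structures.
From mathcomp Require Import all_boot all_order all_algebra generic_quotient.
From mathcomp Require Import all_classical all_reals all_analysis.
From mathcomp Require Import zify ring lra.
Import Order.TTheory GRing.Theory Num.Theory.
Import numFieldNormedType.Exports.
Local Open Scope classical_set_scope.
Local Open Scope ring_scope.
Local Open Scope quotient_scope.
Section S.
Context {R : realType}.
Local Notation T := (torus R).
Local Notation pi := (\pi_T : R -> T).

Lemma int_small0 (x : R) : x \is a Num.int -> `|x| < 1 -> x = 0.
Proof.
move=> /intrP [m ->]; rewrite -intr_norm.
have -> : (1 : R) = (1 : int)%:~R by [].
rewrite ltr_int => hm; have -> : m = 0 by lia.
by [].
Qed.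

Lemma int_lim (w : R) :
  (forall e, 0 < e -> exists2 n, n \is a Num.int & `|w - n| < e) ->
  w \is a Num.int.
Proof.
move=> H; have [n0 n0i hn0] := H (2^-1) ltac:(by []).
suff -> : w = n0 by [].
apply/eqP; rewrite -subr_eq0; apply/negPn/negP => hne.
have hpos : 0 < Num.min `|w - n0| (2^-1).
  rewrite lt_min normr_gt0 hne /=; lra.
have [n ni hn] := H _ hpos.
have hn2 : `|w - n| < 2^-1 by apply: (lt_le_trans hn); rewrite ge_min lexx orbT.
have hn1 : `|w - n| < `|w - n0| by apply: (lt_le_trans hn); rewrite ge_min lexx.
have : n - n0 = 0.
  apply: int_small0; first by rewrite rpredB.
  have -> : n - n0 = (w - n0) - (w - n) by ring.
  apply: (le_lt_trans (ler_normB _ _)).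
  by apply: (@lt_le_trans _ _ (2^-1 + 2^-1)); [apply: ltrD | lra].
move/eqP; rewrite subr_eq0 => /eqP hnn; move: hn1; rewrite hnn ltxx //.
Qed.

Lemma pi0 : pi 0 = 0. Proof. reflexivity. Qed.
Lemma piD x y : pi (x + y) = pi x + pi y. Proof. symmetry; exact: torus_addE. Qed.
Lemma piN x : pi (- x) = - pi x. Proof. symmetry; exact: torus_oppE. Qed.
Lemma piB x y : pi (x - y) = pi x - pi y. Proof. by rewrite piD piN. Qed.
Lemma piMn x n : pi (x *+ n) = pi x *+ n.
Proof. by elim: n => [|n IH]; rewrite ?mulr0n // !mulrS piD IH. Qed.
Lemma pi_cont : continuous pi. Proof. exact: pi_continuous. Qed.
Lemma openT_E (U : set T) : open U <-> open (pi @^-1` U). Proof. by []. Qed.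
Lemma pi_eqP x y : pi x = pi y <-> (x - y) \is a Num.int.
Proof. exact: torus_eqP. Qed.
Lemma pi_surj (t : T) : exists x, t = pi x.
Proof. exact: torus_piP. Qed.

Definition pball (x e : R) : set R := [set y | `|y - x| < e].

Lemma open_piball x e : open (pi @` pball x e).
Proof.
apply/openT_E; rewrite openE => y [z hz /pi_eqP hzy].
apply/nbhs_ballP; exists (e - `|z - x|).
  by rewrite /= subr_gt0.
move=> w; rewrite -ball_normE /= => hw.
exists (z + (w - y)).
  rewrite /pball /=; have -> : z + (w - y) - x = (z - x) + (w - y) by ring.
  apply: (le_lt_trans (ler_normD _ _)).
  by rewrite -ltrBrDl distrC.
apply/pi_eqP; have -> : z + (w - y) - w = z - y by ring.
by [].
Qed.

Lemma nbhs_piball x {e} : 0 < e -> nbhs (pi x) (pi @` pball x e).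
Proof.
move=> he; apply: open_nbhs_nbhs; split; first exact: open_piball.
by exists x => //; rewrite /pball /= subrr normr0.
Qed.

Lemma nbhs_pi {x} {W : set T} : nbhs (pi x) W ->
  exists2 e, 0 < e & forall y, `|y - x| < e -> W (pi y).
Proof.
move=> /pi_cont /nbhs_ballP [e he hb]; exists e => // y hy.
by apply: hb; rewrite -ball_normE /= distrC.
Qed.

Lemma hausT : hausdorff_space T.
Proof.
move=> p q; have [x ->] := pi_surj p; have [y ->] := pi_surj q.
move=> hcl; apply/pi_eqP; apply: int_lim => e he.
have he2 : 0 < e / 2 by rewrite divr_gt0.
have [t [[z hz <-] [w hw hzw]]] := hcl _ _ (nbhs_piball x he2) (nbhs_piball y he2).
move/pi_eqP: hzw => hzw.
exists (z - w); first by rewrite -opprB rpredN.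
have -> : x - y - (z - w) = (w - y) - (z - x) by ring.
apply: (le_lt_trans (ler_normB _ _)).
move: hz hw; rewrite /pball /= => hz hw.
have -> : e = e / 2 + e / 2 by field.
by apply: ltrD.
Qed.

Lemma compactT : compact [set: T].
Proof.
have -> : [set: T] = pi @` `[0, 1].
  apply/seteqP; split => // t _; have [x ->] := pi_surj t.
  exists (x - (Num.floor x)%:~R).
    have h1 := floor_le x; have := floorD1_gt x; rewrite intrD => h2.
    rewrite /= in_itv /=; apply/andP; split; lra.
  apply/pi_eqP; have -> : x - (Num.floor x)%:~R - x = - (Num.floor x)%:~R by ring.
  by rewrite rpredN intr_int.
apply: continuous_compact; last exact: segment_compact.
by apply: continuous_subspaceT => y; exact: pi_cont.
Qed.

Definition Lam (d : R) : set T := pi @` [set x : R | - d <= x <= d].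

Lemma closed_Lam d : closed (Lam d).
Proof.
apply: (compact_closed hausT); rewrite /Lam.
have -> : [set x : R | - d <= x <= d] = `[- d, d]%classic by apply/seteqP; split => x; rewrite /= in_itv /=.
apply: continuous_compact; last exact: segment_compact.
by apply: continuous_subspaceT => y; exact: pi_cont.
Qed.

Lemma Lambda1E : Lambda1 R = Lam 4^-1. Proof. by []. Qed.

Lemma Lam_rep d t : Lam d t -> exists2 y, `|y| <= d & t = pi y.
Proof. by case=> x hx <-; exists x => //; rewrite ler_norml. Qed.

Lemma rep_Lam d y : `|y| <= d -> Lam d (pi y).
Proof. by move=> h; exists y => //; rewrite /= -ler_norml. Qed.

Lemma dbl y : `|y| <= 4^-1 -> Lambda1 R (pi (y *+ 2)) -> `|y *+ 2| <= 4^-1.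
Proof.
move=> hy /Lam_rep [z hz /pi_eqP hzy].
have : y *+ 2 - z = 0.
  apply: int_small0; first by [].
  apply: (le_lt_trans (ler_normB _ _)); rewrite normrMn.
  have : `|y| *+ 2 + `|z| <= 4^-1 *+ 2 + 4^-1 by apply: lerD => //; rewrite lerMn2r.
  move=> h; apply: (le_lt_trans h); rewrite -[X in _ < X]/(1%:R); lra.
by move/eqP; rewrite subr_eq0 => /eqP ->.
Qed.

Lemma iter_dbl m : forall y, `|y| <= 4^-1 ->
  (forall j, (j <= m)%N -> Lambda1 R (pi (y *+ (2 ^ j)))) ->
  `|y| * 2 ^+ m <= 4^-1.
Proof.
elim: m => [|m IH] y hy hj; first by rewrite expr0 mulr1.
have h2 : `|y *+ 2| <= 4^-1 by apply: dbl => //; exact: (hj 1%N).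
have := IH (y *+ 2) h2.
rewrite normrMn => H.
have -> : `|y| * 2 ^+ m.+1 = `|y| *+ 2 * 2 ^+ m by rewrite exprS mulr2n; ring.
apply: H => j hjm.
by rewrite -mulrnA -expnS; apply: hj.
Qed.
End S.

Section M.
Variable R : realType.
Variable A : topologicalZmodType.
Local Notation T := (torus R).
Local Notation pi := (\pi_T : R -> T).
Local Notation D := (dual R A).
Local Notation ev chi a := (dual_val R A chi a).

Lemma chi_char (chi : D) : characters R A (set_val chi).
Proof. exact: set_valP. Qed.

Lemma chiD (chi : D) a b : ev chi (a + b) = ev chi a + ev chi b.
Proof. by have [_ h] := chi_char chi; apply: h. Qed.

Lemma chi0 (chi : D) : ev chi 0 = 0.
Proof.
have h := chiD chi 0 0; rewrite addr0 in h.
by apply/eqP; rewrite -(addrI _ (esym (etrans (addr0 _) h))).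
Qed.

Lemma chiMn (chi : D) a n : ev chi (a *+ n) = ev chi a *+ n.
Proof.
elim: n => [|n IH]; first by rewrite !mulr0n chi0.
by rewrite !mulrS chiD IH.
Qed.

Lemma transl (N : set A) a : nbhs 0 N -> nbhs a [set b | N (b - a)].
Proof.
move=> hN.
have hc : (fun b : A => b - a) @ nbhs a --> (a - a).
  apply: (@continuous_comp _ _ _ (fun b : A => (b, a)) (fun x : A * A => x.1 - x.2)).
    by apply: cvg_pair; [exact: cvg_id | exact: cvg_cst].
  exact: sub_continuous.
rewrite subrr in hc; exact: hc.
Qed.

Lemma ev_cont a : continuous (fun chi : D => ev chi a).
Proof.
move=> chi W hW.
rewrite nbhsE in hW; case: hW => O [oO Oa] OW.
have hS : open ([set g | g @` [set a] `<=` O] : set {compact-open, A -> T}).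
  exact: compact_open_open (@compact_set1 _ a) oO.
have := @initial_continuous _ _ (@set_val _ (characters R A)) chi
   ([set g | g @` [set a] `<=` O] : set {compact-open, A -> T}).
case.
  apply: open_nbhs_nbhs; split => //.
  by rewrite /= image_set1 => y ->.
move=> B [oB Bchi BS].
change (nbhs chi [set psi : D | W (ev psi a)]).
rewrite nbhsE; exists B; first by split.
move=> psi /BS /= h; apply: OW; apply: h; by exists a.
Qed.


Lemma alpha_bichar a : bicharacters R A (fun chi : D => ev chi a).
Proof.
split; first exact: ev_cont.
by move=> chi psi zeta h; apply: h.
Qed.

Variable K : set D.
Hypothesis hK : compact K.
Hypothesis halpha : continuous (alpha R A).

Local Notation Pol := (rpolar R _ _ (bidual_ev R A) (bicharacters R A) K).
Local Notation P := (lpolar R _ _ (bidual_ev R A) Pol).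

Lemma alpha_pol a : (forall chi, K chi -> Lambda1 R (ev chi a)) ->
  Pol (fun chi : D => ev chi a).
Proof. by move=> h; split; [exact: alpha_bichar | exact: h]. Qed.

Lemma equi (e : R) : 0 < e -> exists N : set A,
  nbhs 0 N /\ forall c chi, N c -> P chi -> Lam e (ev chi c).
Proof.
move=> he.
pose n := (Num.trunc e^-1).+1.
have hn1 : e^-1 < n%:R by exact: truncnS_gt.
have hn2 : (n < 2 ^ n)%N by apply: ltn_expl.
have hp : 0 < 2 ^+ n :> R by rewrite exprn_gt0.
have hep : 1 < e * 2 ^+ n.
  have : n%:R <= 2 ^+ n :> R.
    by rewrite -natrX ler_nat ltnW.
  move=> h; have : e^-1 < 2 ^+ n by exact: lt_le_trans hn1 h.
  move=> h2; have hee : e * e^-1 = 1 by rewrite mulfV // gt_eqF.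
  nra.
pose d := (4 * 2 ^+ n)^-1 : R.
have hd : d * 2 ^+ n = 4^-1 by rewrite /d; field; rewrite gt_eqF.
pose O := pi @` pball 0 d.
have hS : open ([set g | g @` K `<=` O] : set {compact-open, D -> T}).
  exact: compact_open_open hK (open_piball _ _).
have S0 : [set g | g @` K `<=` O] (alpha R A 0).
  move=> _ [chi _ <-]; rewrite /alpha chi0; exists 0 => //.
  by rewrite /pball /= subrr normr0 invr_gt0 mulr_gt0.
have := halpha 0 _ (open_nbhs_nbhs (conj hS S0)).
move=> hN; exists (alpha R A @^-1` [set g | g @` K `<=` O]); split; first exact: hN.
move=> c chi hc Pchi.
have hj : forall j, (j <= n)%N -> Lambda1 R (ev chi (c *+ (2 ^ j))).
  move=> j hjn.
  suff hpol : Pol (fun chi : D => ev chi (c *+ 2 ^ j)) by exact: Pchi _ hpol.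
  apply: alpha_pol => chi' Kchi'.
  have [y hy hyc] : O (ev chi' c) by apply: hc; exists chi'.
  rewrite chiMn -hyc -piMn; apply: rep_Lam.
  move: hy; rewrite /pball /= subr0 => hy.
  apply: (@le_trans _ _ (d * 2 ^+ n)); last by rewrite hd. 
  rewrite normrMn -[`|y| *+ _]mulr_natr natrX.
  apply: ler_pM; [exact: normr_ge0 | by rewrite exprn_ge0 | exact: ltW hy | ].
  by apply: ler_weXn2l => //; rewrite ler1n.
have [y0 hy0 hc0] := Lam_rep _ _ (hj 0%N isT).
rewrite expn0 mulr1n in hc0; rewrite hc0; apply: rep_Lam.
have hi : `|y0| * 2 ^+ n <= 4^-1.
  apply: iter_dbl => // j hjn; rewrite piMn -hc0 -chiMn; exact: hj.
have hy00 := normr_ge0 y0.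
nra.
Qed.

Lemma add_cvg {I : Type} (G : set_system I) {FG : Filter G} (u v : I -> T) x y :
  u @ G --> pi x -> v @ G --> pi y -> (fun i => u i + v i) @ G --> pi (x + y).
Proof.
move=> hu hv W hW; have [e he hb] := nbhs_pi hW.
have he2 : 0 < e / 2 by rewrite divr_gt0.
have h1 : G [set i | (pi @` pball x (e / 2)) (u i)] := hu _ (nbhs_piball x he2).
have h2 : G [set i | (pi @` pball y (e / 2)) (v i)] := hv _ (nbhs_piball y he2).
change (G [set i | W (u i + v i)]).
apply: filterS (filterI h1 h2) => i [[x' hx' hux] [y' hy' hvy]].
rewrite /= -hux -hvy -piD; apply: hb.
move: hx' hy'; rewrite /pball /= => hx' hy'.
have -> : x' + y' - (x + y) = (x' - x) + (y' - y) by ring.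
apply: (le_lt_trans (ler_normD _ _)).
have -> : e = e / 2 + e / 2 by field.
exact: ltrD.
Qed.

Lemma ultra_lim (F : set_system D) (UF : UltraFilter F) a :
  exists p : T, (fun chi : D => ev chi a) @ F --> p.
Proof.
have [p [_ hp]] := @compactT R (fmap (fun chi : D => ev chi a) F) _ (@filterT _ _ _).
exists p => W hW.
case: (in_ultra_setVsetC ((fun chi : D => ev chi a) @^-1` W) UF) => // hc.
exfalso; have [t [ht1 ht2]] := hp (~` W) W hc hW; exact: ht1 ht2.
Qed.


Lemma P_compact : compact P.
Proof.
rewrite compact_ultra /= => F UF FP.
have [f hf] := choice (ultra_lim F UF).
have fD : forall a b, f (a + b) = f a + f b.
  move=> a b; have [x hx] := pi_surj (f a); have [y hy] := pi_surj (f b).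
  apply: (@cvg_unique _ hausT (fmap (fun chi : D => ev chi (a + b)) F) _); first exact: hf.
  rewrite /= hx hy -piD.
  have -> : (fun chi : D => ev chi (a + b)) = (fun chi : D => ev chi a + ev chi b).
    by apply: funext => chi; exact: chiD.
  by apply: add_cvg; [rewrite -hx | rewrite -hy]; exact: hf.
have fequi : forall e, 0 < e -> exists N : set A,
    nbhs 0 N /\ forall c, N c -> Lam e (f c).
  move=> e he; have [N [hN hNP]] := equi e he; exists N; split => // c hc.
  apply: (@closed_cvg D T F _ (fun chi : D => ev chi c) (Lam e) (closed_Lam e) _ (f c) (hf c)).
  by apply: filterS FP => chi Pchi; exact: hNP.
have fcont : continuous f.
  move=> a W hW; have [x hx] := pi_surj (f a); rewrite hx in hW.
  have [e he hb] := nbhs_pi hW.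
  have he2 : 0 < e / 2 by rewrite divr_gt0.
  have [N [hN hNf]] := fequi _ he2.
  change (nbhs a [set b | W (f b)]).
  apply: filterS (transl _ a hN) => b hb'.
  rewrite /=; have -> : f b = f a + f (b - a) by rewrite -fD addrC subrK.
  have [y0 hy0 ->] := Lam_rep _ _ (hNf _ hb').
  rewrite hx -piD; apply: hb.
  have -> : x + y0 - x = y0 by ring.
  by apply: le_lt_trans hy0 _; rewrite ltr_pdivrMr // ltr_pMr // ltr1n.
have fchar : characters R A (f : {compact-open, A -> T}) by split.
pose fd : D := exist _ (f : {compact-open, A -> T}) (mem_set fchar).
have evfd : forall a, ev fd a = f a by [].
have Ffd : F --> fd.
  move=> B; rewrite nbhsE => -[V [oV Vfd] VB].
  case: oV => U oU hUV.
  apply: (filterS VB); rewrite -hUV.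
  suff h : (set_val @ F) --> (set_val fd : {compact-open, A -> T}).
    apply: h; apply: open_nbhs_nbhs; split => //.
    by rewrite -hUV in Vfd.
  apply/compact_open_cvgP => C O hC oO hfC.
  suff hcov2 : F [set chi : D | forall x, C x -> O (ev chi x)].
    change (F [set chi : D | (set_val chi : {compact-open, A -> T}) @` C `<=` O]).
    apply: filterS hcov2 => chi h y [x hx <-]; exact: h x hx.
  apply: ((proj1 (compact_near_coveringP C) hC) D F (fun chi x => O (ev chi x))) => // c hc.
  have [x hx] := pi_surj (f c).
  have hO : nbhs (pi x) O.
    by rewrite -hx; apply: open_nbhs_nbhs; split => //; apply: hfC; exists c.
  have [e he hb] := nbhs_pi hO.
  have he2 : 0 < e / 2 by rewrite divr_gt0.
  have [N [hN hNP]] := equi _ he2.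
  have hfc := hf c; rewrite hx in hfc.
  exists ([set b | N (b - c)], [set chi : D | P chi /\ (pi @` pball x (e/2)) (ev chi c)]).
    split; first exact: transl _ c hN.
    have h2 : F [set chi : D | (pi @` pball x (e/2)) (ev chi c)].
      exact: hfc _ (nbhs_piball x he2).
    exact: (filterI FP h2).
  case=> b chi [/= hbN [Pchi [x' hx' hx'c]]].
  have [y0 hy0 hy0c] := Lam_rep _ _ (hNP _ _ hbN Pchi).
  have -> : ev chi b = ev chi c + ev chi (b - c) by rewrite -chiD addrC subrK.
  rewrite -hx'c hy0c -piD; apply: hb.
  move: hx'; rewrite /pball /= => hx'.
  have -> : x' + y0 - x = (x' - x) + y0 by ring.
  apply: (le_lt_trans (ler_normD _ _)).
  have -> : e = e / 2 + e / 2 by field.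
  lra.
exists fd; split; last exact: Ffd.
move=> phi hphi; have [[phicont _] _] := hphi.
rewrite /bidual_ev Lambda1E.
apply: (@closed_cvg D T F _ phi (Lam 4^-1) (closed_Lam _) _ (phi fd)).
  by apply: filterS FP => chi Pchi; exact: Pchi _ hphi.
move=> W hW; exact: Ffd _ (phicont fd W hW).
Qed.
End M.

Theorem mainTheorem7 (R : realType) (A : topologicalZmodType) :
  continuous (alpha R A) -> dual_QCP R A.
Proof. by move=> h K hK; exact: (@P_compact R A K hK h). Qed.
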